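(* Let $\gamma=(1+\sqrt5)/2$ and let $(r_i)_{i\ge0}$ be a sequence of positive real numbers. Suppose there are constants $c_1,c_2>0$ such that $c_1r_ir_{i+1}\le r_{i+2}\le c_2r_ir_{i+1}$ for all $i\ge0$. Then there are constants $c_3,c_4>0$ such that $c_3r_i^\gamma\le r_{i+1}\le c_4r_i^\gamma$ for all $i\ge0$. *)

(* Defs.v *)
From Stdlib Require Import Reals.
Open Scope R_scope.

Definition golden : R := (1 + sqrt 5) / 2.

(* Main.v *)
Require Import Defs.
From Stdlib Require Import Reals Lra.
Open Scope R_scope.

Lemma ln_le' x y : 0 < x -> x <= y -> ln x <= ln y.
Proof.
  intros Hx Hxy. destruct (Rle_lt_or_eq_dec _ _ Hxy) as [H|H].
  - left. apply ln_increasing; auto.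
  - subst; lra.
Qed.

Lemma exp_le' x y : x <= y -> exp x <= exp y.
Proof.
  intros Hxy. destruct (Rle_lt_or_eq_dec _ _ Hxy) as [H|H].
  - left. apply exp_increasing; auto.
  - subst; lra.
Qed.

Theorem lemma5p2 (r : nat -> R) (c1 c2 : R) :
  (forall i, 0 < r i) ->
  0 < c1 -> 0 < c2 ->
  (forall i, c1 * r i * r (S i) <= r (S (S i)) /\ r (S (S i)) <= c2 * r i * r (S i)) ->
  exists c3 c4 : R, 0 < c3 /\ 0 < c4 /\
    forall i, c3 * Rpower (r i) golden <= r (S i) /\ r (S i) <= c4 * Rpower (r i) golden.
Proof.
  intros Hr Hc1 Hc2 H.
  set (g := golden).
  assert (Hs5 : sqrt 5 * sqrt 5 = 5) by (apply sqrt_sqrt; lra).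
  assert (Hs0 : 0 <= sqrt 5) by apply sqrt_pos.
  assert (Hs2 : 2 < sqrt 5) by nra.
  assert (Hs3 : sqrt 5 < 2.4) by nra.
  assert (Hg2 : g * (g - 1) = 1) by (unfold g, golden; nra).
  assert (Hgl : 1.5 < g) by (unfold g, golden; lra).
  assert (Hgu : g < 1.7) by (unfold g, golden; lra).
  set (s := fun i => ln (r i)).
  set (t := fun i => s (S i) - g * s i).
  set (K := Rabs (ln c1) + Rabs (ln c2)).
  assert (HK1 : -K <= ln c1) by (unfold K; pose proof (Rle_abs (- ln c1)); rewrite Rabs_Ropp in H0; pose proof (Rabs_pos (ln c2)); lra).
  assert (HK2 : ln c2 <= K) by (unfold K; pose proof (Rle_abs (ln c2)); pose proof (Rabs_pos (ln c1)); lra).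
  assert (He : forall i, ln c1 <= s (S (S i)) - s i - s (S i) <= ln c2).
  { intro i. destruct (H i) as [A B]. pose proof (Hr i). pose proof (Hr (S i)).
    apply ln_le' in A; [| apply Rmult_lt_0_compat; [apply Rmult_lt_0_compat|]; auto].
    apply ln_le' in B; [| apply Hr].
    rewrite !ln_mult in A, B; try apply Rmult_lt_0_compat; auto.
    unfold s; lra. }
  set (M := Rabs (t 0%nat) + 4 * K).
  assert (HK0 : 0 <= K) by (unfold K; pose proof (Rabs_pos (ln c1)); pose proof (Rabs_pos (ln c2)); lra).
  assert (Ht : forall i, - M <= t i <= M).
  { induction i as [|i IH].
    - unfold M. pose proof (Rle_abs (t 0%nat)). pose proof (Rle_abs (- t 0%nat)).
      rewrite Rabs_Ropp in H1. lra.
    - assert (Hrec : t (S i) = (s (S (S i)) - s i - s (S i)) - (g - 1) * t i).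
      { unfold t.
        assert (E : (g-1)*(s (S i) - g * s i) = (g-1)*s (S i) - s i).
        { replace ((g-1)*(s (S i) - g * s i)) with ((g-1)*s (S i) - (g*(g-1))* s i) by ring.
          rewrite Hg2. ring. }
        rewrite E. ring. }
      rewrite Hrec. pose proof (He i).
      assert (0 <= M) by (unfold M; pose proof (Rabs_pos (t 0%nat)); lra).
      assert ((g-1) * (M - t i) >= 0) by nra.
      assert ((g-1) * (M + t i) >= 0) by nra.
      assert ((g-1) * M <= 0.7 * M) by nra.
      assert (4 * K <= M) by (unfold M; pose proof (Rabs_pos (t 0%nat)); lra).
      split; lra. }
  exists (exp (- M)), (exp M). split; [apply exp_pos|]. split; [apply exp_pos|].
  intro i.
  assert (Heq : r (S i) = exp (t i) * Rpower (r i) golden).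
  { unfold Rpower, t, s. rewrite <- exp_plus. fold g.
    replace (ln (r (S i)) - g * ln (r i) + g * ln (r i)) with (ln (r (S i))) by ring.
    rewrite exp_ln; auto. }
  rewrite Heq. destruct (Ht i).
  assert (0 < Rpower (r i) golden) by (unfold Rpower; apply exp_pos).
  split; apply Rmult_le_compat_r; try (left; exact H2); apply exp_le'; lra.
Qed.
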